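(* Let $g:\mathbb{R}^d\times\mathbb{R}^d\to\mathbb{R}^d$ and $R>0$ satisfy: (i) there exists $L_{g,R}\ge0$ such that $\|g(x,z_1)-g(x,z_2)\|\le L_{g,R}\|z_1-z_2\|$ for all $z_1,z_2,x\in\mathbb{R}^d$ with $\|x\|\le R$; (ii) there exist $C_{R,0},C_{R,1}\ge0$ such that $\|g(x,z)\|\le C_{R,0}+C_{R,1}\|z\|$ for all $x,z$ with $\|x\|\le R$. Let $b\in\mathbb{R}$ with $|b|>C_{R,1}$ and $f^g(x,z)=bz+g(x,z)$, $f^g_x=f^g(x,\cdot)$. Then for every $M>0$, with $\tilde M=(M+C_{R,0})/(|b|-C_{R,1})$: there exists $L\ge0$ such that $f^g_x$ is $L$-Lipschitz for every $x\in B(0,R)$, and $B(0,M)\subset f^g_x(B(0,\tilde M))$ for every $x\in B(0,R)$.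
   Context: $B(x,r)$ denotes the Euclidean ball centered at $x$ of radius $r$. *)

(* Defs.v *)
From HB Require Import structures.
From mathcomp Require Import all_boot all_order all_algebra.
From mathcomp Require Import reals.
Set Implicit Arguments. Unset Strict Implicit. Unset Printing Implicit Defensive.
Import Order.TTheory GRing.Theory Num.Theory.
Local Open Scope ring_scope.

Definition enorm (R : realType) (d : nat) (v : 'rV[R]_d) : R :=
  Num.sqrt (\sum_(i < d) (v ord0 i) ^+ 2).

Definition eball (R : realType) (d : nat) (c : 'rV[R]_d) (r : R) : 'rV[R]_d -> Prop :=
  fun v => enorm (v - c) < r.

Definition lipschitz_with (R : realType) (d : nat) (L : R) (h : 'rV[R]_d -> 'rV[R]_d) : Prop :=
  forall z1 z2, enorm (h z1 - h z2) <= L * enorm (z1 - z2).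

Definition fg (R : realType) (d : nat) (b : R) (g : 'rV[R]_d -> 'rV[R]_d -> 'rV[R]_d)
  (x z : 'rV[R]_d) : 'rV[R]_d := b *: z + g x z.

(* Main.v *)
Require Import Defs.
From HB Require Import structures.
From mathcomp Require Import all_boot all_order all_algebra all_fingroup.
From mathcomp Require Import reals.
From mathcomp Require Import all_classical all_reals all_analysis.
From mathcomp Require Import zify ring lra.
Import Order.TTheory GRing.Theory Num.Theory.
Import numFieldNormedType.Exports.

Module Kuhn.
Set Implicit Arguments. Unset Strict Implicit. Unset Printing Implicit Defensive.
Lemma invol_even (T : finType) (A : {set T}) (f : T -> T) :
  (forall x, x \in A -> [/\ f x \in A, f (f x) = x & f x != x]) -> ~~ odd #|A|.
Proof.
suff: forall N (A : {set T}), #|A| <= N ->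
  (forall x, x \in A -> [/\ f x \in A, f (f x) = x & f x != x]) -> ~~ odd #|A|.
  by move=> h; apply: h.
elim=> [|N IH] B hB H.
  by move: hB; rewrite leqn0 => /eqP ->.
case: (set_0Vmem B) => [->|[x xB]]; first by rewrite cards0.
have [fxB ffx fxx] := H x xB.
set S := [set x; f x].
have SB : S \subset B by apply/fintype.subsetP => y; rewrite !inE => /orP[]/eqP->.
have cS : #|S| = 2 by rewrite cards2 eq_sym fxx.
have e : #|B| = #|B :\: S| + 2.
  by rewrite -cS -(cardsID S B) (finset.setIidPr SB) addnC.
rewrite e oddD /= addbF; apply: IH; first by move: hB; rewrite e; lia.
move=> y; rewrite !inE => /andP[yS yB].
have [fyB ffy fyy] := H y yB.
rewrite fyB ffy fyy andbT; split => //.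
apply/negP => /orP[/eqP h|/eqP h].
  by move: yS; rewrite -ffy h eqxx orbT.
by move: yS; rewrite -ffy h ffx eqxx.
Qed.

Section Kuhn.
Variables (n k : nat).
Local Notation V := {ffun 'I_n.+1 -> 'I_k.+1}.
Local Notation P := {perm 'I_n.+1}.
Local Notation J := 'I_n.+2.
Local Notation pnt := {ffun 'I_n.+1 -> nat}.
Variable lab : pnt -> J.

Definition pt (v : V) (t : P) (j : J) : pnt := [ffun i => v i + (t i < j)].
Definition X := (V * P * J)%type.
Definition lbl (x : X) (m : J) := lab (pt x.1.1 x.1.2 m).
Definition doorb (x : X) := [forall c : J, (c != ord0) ==>
   [exists m : J, (m != x.2) && (lbl x m == c)]].
Definition D := [set x : X | doorb x].
Definition fullb (x : X) := [forall c : J, [exists m : J, lbl x m == c]].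

Lemma doorP (x : X) : reflect (forall c, c != ord0 -> exists2 m, m != x.2 & lbl x m = c) (doorb x).
Proof.
apply: (iffP forallP) => [h c c0|h c]; last first.
  by apply/implyP => c0; have [m m1 m2] := h c c0; apply/existsP; exists m; rewrite m1 m2 eqxx.
by have /existsP[m /andP[m1 /eqP m2]] := implyP (h c) c0; exists m.
Qed.

Lemma door_inj (x : X) : x \in D -> {in [set m | m != x.2] &, injective (lbl x)}.
Proof.
rewrite inE => /doorP cov; apply/imset_injP.
have e : [set m | m != x.2] = [set~ x.2] by apply/setP => m; rewrite !inE.
rewrite eqn_leq leq_imset_card /= e cardsC1 card_ord /=.
apply: (@leq_trans #|[set~ (ord0 : J)]|); first by rewrite cardsC1 card_ord.
apply: subset_leq_card; apply/fintype.subsetP => c; rewrite !inE => c0.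
by have [m m1 m2] := cov c c0; rewrite -m2; apply: imset_f; rewrite !inE.
Qed.

Definition f1 (x : X) : X := (x.1, odflt x.2 [pick m | (m != x.2) && (lbl x m == lbl x x.2)]).

Lemma f1_props (x : X) : x \in D -> ~~ fullb x ->
  [/\ f1 x \in D, f1 (f1 x) = x & f1 x != x].
Proof.
move=> xD nf; have inj := door_inj xD; move: (xD); rewrite inE => /doorP cov.
have l0 : lbl x x.2 != ord0.
  apply/negP => /eqP h; move/negP: nf; apply; apply/forallP => c; apply/existsP.
  case: (eqVneq c ord0) => [->|cn]; first by exists x.2; rewrite h.
  by have [m _ hm] := cov c cn; exists m; rewrite hm.
have [m hmj hm] := cov _ l0.
case: x xD nf inj cov l0 m hmj hm => [[v t] j] /= xD nf inj cov l0 m hmj hm.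
rewrite /f1 /=; case: pickP => [m0 /andP[m0j /eqP hm0] | none]; last first.
  by have := none m; rewrite hmj hm eqxx.
rewrite /=; split.
- rewrite inE; apply/doorP => c c0 /=.
  case: (eqVneq c (lbl (v, t, j) j)) => [->|cn].
    by exists j; rewrite // eq_sym.
  have [m' m'j hm'] := cov c c0; exists m' => //.
  by apply/eqP => e; move: hm'; rewrite e hm0 => /esym/eqP; rewrite (negbTE cn).
- case: pickP => [m1 /andP[m1m0 /eqP hm1] | none2] /=.
    case: (eqVneq m1 j) => [->//|m1j].
    have := inj m1 m0; rewrite !inE m1j m0j => /(_ isT isT).
    by rewrite /lbl /= in hm1 hm0 *; rewrite hm1 => /(_ erefl) e; move: m1m0; rewrite e eqxx.
  have := none2 j; rewrite eq_sym m0j /=.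
  by rewrite /lbl /= in hm0 *; rewrite hm0 eqxx.
- by apply/negP => /eqP [] /eqP; rewrite (negbTE m0j).
Qed.

Lemma door_trans (x x' : X) : x \in D ->
  (forall m, m != x.2 -> exists2 m', m' != x'.2 & pt x'.1.1 x'.1.2 m' = pt x.1.1 x.1.2 m) ->
  x' \in D.
Proof.
rewrite !inE => /doorP cov h; apply/doorP => c c0.
have [m m1 m2] := cov c c0; have [m' m'1 m'2] := h m m1.
by exists m' => //; rewrite /lbl m'2.
Qed.

Definition ta (t : P) : 'I_n.+1 := (t^-1)%g ord0.
Definition tb (t : P) : 'I_n.+1 := (t^-1)%g ord_max.
Lemma ta_spec (t : P) i : (t i == ord0) = (i == ta t).
Proof. by rewrite /ta; apply/eqP/eqP => [<-|->]; [rewrite permK | rewrite permKV]. Qed.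
Lemma tb_spec (t : P) i : (t i == ord_max) = (i == tb t).
Proof. by rewrite /tb; apply/eqP/eqP => [<-|->]; [rewrite permK | rewrite permKV]. Qed.

Definition sd_fun (t : P) (i : 'I_n.+1) : 'I_n.+1 :=
  if i == ta t then ord_max else inord (t i).-1.
Definition su_fun (t : P) (i : 'I_n.+1) : 'I_n.+1 :=
  if i == tb t then ord0 else inord (t i).+1.

Lemma val_neq (N : nat) (a b : 'I_N) : a != b -> (a : nat) <> b.
Proof. by move=> /eqP h e; apply: h; apply: val_inj. Qed.

Lemma sd_inj (t : P) : injective (sd_fun t).
Proof.
move=> i1 i2; rewrite /sd_fun.
have h1 : ((t i1 : nat) == 0) = (i1 == ta t) by rewrite -ta_spec.
have h2 : ((t i2 : nat) == 0) = (i2 == ta t) by rewrite -ta_spec.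
have l1 := ltn_ord (t i1); have l2 := ltn_ord (t i2).
case: (i1 =P ta t) h1 => e1 h1; case: (i2 =P ta t) h2 => e2 h2; rewrite ?e1 ?e2 //.
- move/negbT/eqP: h2 => h2; move/(congr1 val); rewrite /= inordK; lia.
- move/negbT/eqP: h1 => h1; move/(congr1 val); rewrite /= inordK; lia.
- move/negbT/eqP: h1 => h1; move/negbT/eqP: h2 => h2.
  move/(congr1 val); rewrite /= !inordK; try lia.
  by move=> e; apply: (@perm_inj _ t); apply: val_inj; rewrite /=; lia.
Qed.

Lemma su_inj (t : P) : injective (su_fun t).
Proof.
move=> i1 i2; rewrite /su_fun.
have h1 : ((t i1 : nat) == n) = (i1 == tb t) by rewrite -tb_spec.
have h2 : ((t i2 : nat) == n) = (i2 == tb t) by rewrite -tb_spec.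
have l1 := ltn_ord (t i1); have l2 := ltn_ord (t i2).
case: (i1 =P tb t) h1 => e1 h1; case: (i2 =P tb t) h2 => e2 h2; rewrite ?e1 ?e2 //.
- move/negbT/eqP: h2 => h2; move/(congr1 val); rewrite /= inordK; lia.
- move/negbT/eqP: h1 => h1; move/(congr1 val); rewrite /= inordK; lia.
- move/negbT/eqP: h1 => h1; move/negbT/eqP: h2 => h2.
  move/(congr1 val); rewrite /= !inordK; try lia.
  by move=> e; apply: (@perm_inj _ t); apply: val_inj; rewrite /=; lia.
Qed.

Definition sd (t : P) : P := perm (@sd_inj t).
Definition su (t : P) : P := perm (@su_inj t).
Definition vinc (v : V) (i0 : 'I_n.+1) : V := [ffun i => if i == i0 then inord (v i).+1 else v i].
Definition vdec (v : V) (i0 : 'I_n.+1) : V := [ffun i => if i == i0 then inord (v i).-1 else v i].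
Definition sw (j : J) : P := tperm (inord j.-1) (inord j).

Definition f2 (x : X) : X := let: (v, t, j) := x in
  if j == ord0 then (if v (ta t) < k then (vinc v (ta t), sd t, ord_max) else x)
  else if j == ord_max then (if 0 < v (tb t) then (vdec v (tb t), su t, ord0) else x)
  else (v, (t * sw j)%g, j).

Lemma pt_mid (v : V) (t : P) (j m : J) : j != ord0 -> j != ord_max -> m != j ->
  pt v (t * sw j)%g m = pt v t m.
Proof.
move=> /val_neq j0 /val_neq jm /val_neq mj; rewrite /= in j0 jm.
have lj := ltn_ord j.
apply/ffunP => i; rewrite !ffunE permM /sw.
case: tpermP => [h|h|h1 h2]; rewrite ?h //.
- rewrite !inordK; try lia; congr (_ + nat_of_bool _); apply/idP/idP; lia.
- rewrite !inordK; try lia; congr (_ + nat_of_bool _); apply/idP/idP; lia.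
Qed.

Lemma pt_sd (v : V) (t : P) (m : J) : v (ta t) < k -> m != ord0 ->
  pt (vinc v (ta t)) (sd t) (inord m.-1) = pt v t m.
Proof.
move=> vk /val_neq m0; rewrite /= in m0; have lm := ltn_ord m.
apply/ffunP => i; rewrite !ffunE permE /sd_fun.
have h1 : ((t i : nat) == 0) = (i == ta t) by rewrite -ta_spec.
have li := ltn_ord (t i); have lv := ltn_ord (v i).
case: (i =P ta t) h1 => e h1.
- by move/eqP: h1 => h1; rewrite -e in vk; rewrite /= !inordK; try lia.
- move/negbT/eqP: h1 => h1; rewrite /= !inordK; try lia.
  all: try (congr (_ + nat_of_bool _); apply/idP/idP; lia).
Qed.

Lemma pt_su (v : V) (t : P) (m : J) : 0 < v (tb t) -> m != ord_max ->
  pt (vdec v (tb t)) (su t) (inord m.+1) = pt v t m.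
Proof.
move=> vk /val_neq m0; rewrite /= in m0; have lm := ltn_ord m.
apply/ffunP => i; rewrite !ffunE permE /su_fun.
have h1 : ((t i : nat) == n) = (i == tb t) by rewrite -tb_spec.
have li := ltn_ord (t i); have lv := ltn_ord (v i).
case: (i =P tb t) h1 => e h1.
- move/eqP: h1 => h1; rewrite -e in vk; rewrite /= !inordK; try lia.
- move/negbT/eqP: h1 => h1; rewrite /= !inordK; try lia.
  all: try (congr (_ + nat_of_bool _); apply/idP/idP; lia).
Qed.

Lemma tb_sd (t : P) : tb (sd t) = ta t.
Proof. by apply/eqP; rewrite eq_sym -tb_spec permE /sd_fun eqxx. Qed.
Lemma ta_su (t : P) : ta (su t) = tb t.
Proof. by apply/eqP; rewrite eq_sym -ta_spec permE /su_fun eqxx. Qed.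

Lemma su_sd (t : P) : su (sd t) = t.
Proof.
apply/perm.permP => i; rewrite permE /su_fun tb_sd.
case: (i =P ta t) => e.
  by rewrite e /ta permKV.
rewrite permE /sd_fun; move/eqP/negbTE: (e) => ->.
have h1 : ((t i : nat) == 0) = (i == ta t) by rewrite -ta_spec.
move/eqP/negbTE: e; rewrite -h1 => /negbT/eqP h.
have li := ltn_ord (t i).
by apply: val_inj; rewrite /= !inordK; lia.
Qed.

Lemma sd_su (t : P) : sd (su t) = t.
Proof.
apply/perm.permP => i; rewrite permE /sd_fun ta_su.
case: (i =P tb t) => e.
  by rewrite e /tb permKV.
rewrite permE /su_fun; move/eqP/negbTE: (e) => ->.
have h1 : ((t i : nat) == n) = (i == tb t) by rewrite -tb_spec.
move/eqP/negbTE: e; rewrite -h1 => /negbT/eqP h.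
have li := ltn_ord (t i).
by apply: val_inj; rewrite /= !inordK; lia.
Qed.

Lemma vdec_vinc (v : V) (a : 'I_n.+1) : v a < k -> vdec (vinc v a) a = v.
Proof.
move=> h; apply/ffunP => i; rewrite !ffunE; case: eqP => [->|] //.
by apply: val_inj; rewrite /= !inordK; lia.
Qed.

Lemma vinc_vdec (v : V) (a : 'I_n.+1) : 0 < v a -> vinc (vdec v a) a = v.
Proof.
move=> h; have := ltn_ord (v a) => h'.
apply/ffunP => i; rewrite !ffunE; case: eqP => [->|] //.
by apply: val_inj; rewrite /= !inordK; lia.
Qed.

Definition inner (x : X) := ((x.2 == ord0) ==> (x.1.1 (ta x.1.2) < k)) &&
   ((x.2 == ord_max) ==> (0 < x.1.1 (tb x.1.2))).

Lemma max0 : (ord_max : J) != ord0. Proof. by []. Qed.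

Lemma f2_props (x : X) : inner x ->
  [/\ f2 (f2 x) = x, f2 x != x &
   forall m, m != x.2 -> exists2 m', m' != (f2 x).2 &
      pt (f2 x).1.1 (f2 x).1.2 m' = pt x.1.1 x.1.2 m].
Proof.
case: x => [[v t] j]; rewrite /inner /=.
case: (j =P ord0) => [->|j0] /=.
  move=> /andP[vk _]; rewrite vk /= eqxx tb_sd.
  have -> : 0 < vinc v (ta t) (ta t).
    by rewrite ffunE eqxx inordK; lia.
  rewrite vdec_vinc // su_sd; split => //; last first.
    move=> m m0; exists (inord m.-1); last by rewrite pt_sd.
    by apply/eqP => /(congr1 val); rewrite /= inordK; have := ltn_ord m; lia.
  by apply/negP => /eqP /(congr1 (fun x : X => (x.2 : nat))).
case: (j =P ord_max) => [->|jm] /=.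
  move=> vk; rewrite vk /= ta_su.
  have -> : vdec v (tb t) (tb t) < k.
    by rewrite ffunE eqxx inordK; have := ltn_ord (v (tb t)); lia.
  rewrite vinc_vdec // sd_su; split => //; last first.
    move=> m m0; exists (inord m.+1); last by rewrite pt_su.
    by apply/eqP => /(congr1 val); rewrite /= inordK; have := ltn_ord m; move/val_neq: m0 => /= m0; lia.
  by apply/negP => /eqP /(congr1 (fun x : X => (x.2 : nat))).
move/eqP: j0 => j0; move/eqP: jm => jm.
move=> _; rewrite (negbTE j0) (negbTE jm); split.
- by rewrite -mulgA tperm2 mulg1.
- apply/negP => /eqP [] /perm.permP /(_ ((t^-1)%g (inord j.-1))).
  rewrite permM permKV /sw tpermL => /(congr1 val).
  move/val_neq: j0; move/val_neq: jm => /= jm j0; have lj := ltn_ord j.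
  rewrite !inordK; lia.
- by move=> m mj; exists m => //; rewrite pt_mid.
Qed.

Lemma dec_rev (N : nat) (t : {perm 'I_N}) :
  (forall i j : 'I_N, i < j -> t j < t i) -> forall i, t i = rev_ord i.
Proof.
move=> dec.
have A : forall m (i : 'I_N), N - 1 - i = m -> m <= t i.
  elim=> [//|m IH] i e.
  have lt : i.+1 < N by lia.
  have := IH (Ordinal lt); rewrite /= => /(_ ltac:(lia)) h.
  have := dec i (Ordinal lt) (ltnSn i); lia.
have B : forall m (i : 'I_N), (i : nat) = m -> t i <= N - 1 - m.
  elim=> [|m IH] i e; first by have := ltn_ord (t i); lia.
  have lt : m < N by have := ltn_ord i; lia.
  have := IH (Ordinal lt) erefl => h.
  have := dec (Ordinal lt) i ltac:(rewrite /=; lia); lia.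
move=> i; apply: val_inj => /=.
have := A _ i erefl; have := B _ i erefl; have := ltn_ord i; lia.
Qed.

Hypothesis Hbot : forall (p : pnt) (i : 'I_n.+1), p i = 0 -> lab p != lift ord0 i.
Hypothesis Htop : forall (p : pnt) (i : 'I_n.+1), p i = k.+1 ->
  (forall i' : 'I_n.+1, i' < i -> p i' != k.+1) -> lab p = lift ord0 i.

Lemma bot_notD (v : V) (t : P) : (v (tb t) : nat) = 0 -> (v, t, ord_max) \notin D.
Proof.
move=> v0; apply/negP; rewrite inE => /doorP cov.
have [m mm hm] := cov (lift ord0 (tb t)) (ltac:(by rewrite eq_sym neq_lift)).
move/val_neq: mm => /= mm.
have := Hbot (p := pt v t m) (i := tb t); rewrite /lbl /= in hm; rewrite hm eqxx.
move=> h; suff hp : pt v t m (tb t) = 0 by move: (h hp).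
rewrite ffunE v0 /tb permKV /=.
by have := ltn_ord m; case: ltnP => //; lia.
Qed.

Definition vs : V := [ffun=> ord_max].
Definition ts : P := perm (@rev_ord_inj n.+1).
Definition s : X := (vs, ts, ord0).

Lemma s_in_D : s \in D.
Proof.
rewrite inE; apply/doorP => c c0.
case: (unliftP ord0 c) => [i ->| e]; last by rewrite e eqxx in c0.
have li : @nat_of_ord n.+1 i < n.+1 := ltn_ord i.
exists (inord (n.+1 - i)).
  by apply/eqP => /(congr1 val); rewrite /= inordK; lia.
rewrite /lbl /=; apply: Htop.
  rewrite ffunE permE /= ffunE inordK; last by lia.
  by change (@nat_of_ord k.+1 ord_max) with k; lia.
move=> i' lt; rewrite ffunE permE /= ffunE inordK; last by lia.
by change (@nat_of_ord k.+1 ord_max) with k; have := ltn_ord i'; lia.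
Qed.

Lemma f2_s : f2 s = s.
Proof. by rewrite /f2 /s /= ffunE /= ltnn. Qed.

Lemma lab_top (p : pnt) (a i : 'I_n.+1) : p a = k.+1 -> lab p = lift ord0 i ->
  p i = k.+1 /\ forall i' : 'I_n.+1, i' < i -> p i' != k.+1.
Proof.
move=> pa hl.
case: (@arg_minnP _ a (fun i => p i == k.+1) (fun i : 'I_n.+1 => (i : nat)) (introT eqP pa)) => i0 /eqP h0 hmin.
have := Htop (i := i0) h0; rewrite hl.
have mn : forall i' : 'I_n.+1, i' < i0 -> p i' != k.+1.
  by move=> i' lt; apply/negP => /hmin; lia.
move=> /(_ mn) /lift_inj e; subst i0; split => //.
Qed.

Lemma top_uniq (v : V) (t : P) : ~~ (v (ta t) < k) -> (v, t, ord0) \in D -> (v, t, ord0) = s.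
Proof.
move=> vk; rewrite inE => /doorP cov.
have va : (v (ta t) : nat) = k by have := ltn_ord (v (ta t)); lia.
have H : forall i : 'I_n.+1, exists m : J, (m : nat) <> 0 /\ pt v t m i = k.+1 /\
     forall i' : 'I_n.+1, i' < i -> pt v t m i' != k.+1.
  move=> i; have c0 : lift ord0 i != ord0 :> J by rewrite eq_sym neq_lift.
  have [m m0 hm] := cov (lift ord0 i) c0.
  move/val_neq: m0 => /= m0.
  have pa : pt v t m (ta t) = k.+1.
    by rewrite ffunE va /ta permKV /=; case: ltnP => //; lia.
  by have [h1 h2] := lab_top pa hm; exists m.
have vK : forall i, (v i : nat) = k.
  move=> i; have [m [_ [h _]]] := H i; move: h; rewrite ffunE.
  by have := ltn_ord (v i); case: ltnP; lia.
have ev : v = vs by apply/ffunP => i; apply: val_inj; rewrite ffunE /= vK.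
have et : t = ts.
  apply/perm.permP => i; rewrite permE; apply: dec_rev => i1 i2 lt.
  have [m [_ [h1 h2]]] := H i2; have := h2 _ lt; move: h1; rewrite !ffunE !vK.
  by case: ltnP; case: ltnP; lia.
by rewrite ev et.
Qed.

Lemma kuhn : exists (v : V) (t : P), forall c, exists m, lab (pt v t m) = c.
Proof.
case: (boolP [exists x : X, fullb x]) => [/existsP [[[v t] j] /forallP h] | nf].
  by exists v, t => c; have /existsP [m /eqP hm] := h c; exists m.
exfalso; rewrite negb_exists in nf; move/forallP: nf => nf.
have ev1 : ~~ odd #|D| := invol_even (fun x xD => f1_props xD (nf x)).
have ev2 : ~~ odd #|D :\ s|.
  apply: (invol_even (f := f2)) => x; rewrite !inE => /andP [xs xD].
  have inn : inner x.
    case: x xs xD => [[v t] j] xs xD; rewrite /inner /=; apply/andP; split;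
      apply/implyP => /eqP ej; subst j.
      case: ltnP => // hv; exfalso; move/negP: xs; apply; apply/eqP.
      by apply: top_uniq; rewrite ?inE // -leqNgt.
    rewrite lt0n; apply/negP => /eqP hv; have := bot_notD hv.
    have xD' : (v, t, ord_max) \in D by rewrite finset.inE.
    by rewrite xD'.
  have [ff fne tr] := f2_props inn.
  have f2D : f2 x \in D by apply: door_trans tr; rewrite inE.
  rewrite inE in f2D; rewrite f2D andbT; split => //.
  by apply/negP => /eqP e; move: xs; rewrite -ff e f2_s eqxx.
move: ev1; rewrite (cardsD1 s D) s_in_D /= => h.
by move: ev2; rewrite (negbTE h).
Qed.

End Kuhn.
End Kuhn.
Import Kuhn.

Local Open Scope ring_scope.

Lemma cs_sq (R : realType) (d : nat) (a b : 'I_d -> R) :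
  (\sum_i a i * b i) ^+ 2 <= (\sum_i a i ^+ 2) * (\sum_i b i ^+ 2).
Proof.
set A := \sum_i a i ^+ 2; set B := \sum_i b i ^+ 2; set S := \sum_i a i * b i.
have A0 : 0 <= A by apply: sumr_ge0 => i _; apply: sqr_ge0.
have B0 : 0 <= B by apply: sumr_ge0 => i _; apply: sqr_ge0.
have [Az|Ap] := eqVneq A 0.
  have a0 : forall i, a i = 0.
    move=> i; apply/eqP; rewrite -sqrf_eq0; apply/eqP.
    by apply: (psumr_eq0P (P := xpredT) _ Az) => // j _; apply: sqr_ge0.
  have -> : S = 0 by rewrite /S big1 // => i _; rewrite a0 mul0r.
  by rewrite expr0n /= mulr_ge0.
have Apos : 0 < A by rewrite lt_def Ap A0.
set t := S / A.
have key : \sum_i (t * a i - b i) ^+ 2 = t ^+ 2 * A - 2 * t * S + B.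
  transitivity (\sum_i (t ^+ 2 * a i ^+ 2 - 2 * t * (a i * b i) + b i ^+ 2)).
    by apply: eq_bigr => i _; ring.
  by rewrite big_split /= sumrB -!mulr_sumr.
have : 0 <= \sum_i (t * a i - b i) ^+ 2 by apply: sumr_ge0 => i _; apply: sqr_ge0.
rewrite key /t => h.
have e : (S / A) ^+ 2 * A - 2 * (S / A) * S + B = B - S ^+ 2 / A.
  by field; rewrite Ap.
rewrite e subr_ge0 ler_pdivrMr // in h.
by rewrite mulrC.
Qed.

Lemma le_sq (R : realType) (x y : R) : 0 <= x -> 0 <= y -> x ^+ 2 <= y ^+ 2 -> x <= y.
Proof. by move=> x0 y0; rewrite (ler_pXn2r (n := 2)) ?nnegrE. Qed.

Section En.
Context {R : realType} {d : nat}.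
Implicit Types (u v : 'rV[R]_d).

Lemma enorm_ge0 v : 0 <= enorm v.
Proof. exact: sqrtr_ge0. Qed.

Lemma sum_sq_ge0 (a : 'I_d -> R) : 0 <= \sum_i a i ^+ 2.
Proof. by apply: sumr_ge0 => i _; apply: sqr_ge0. Qed.

Lemma enorm_sq v : enorm v ^+ 2 = \sum_i (v ord0 i) ^+ 2.
Proof. by rewrite /enorm sqr_sqrtr // sum_sq_ge0. Qed.

Lemma enorm_coord v i : `|v ord0 i| <= enorm v.
Proof.
apply: le_sq => //; first exact: enorm_ge0.
rewrite enorm_sq real_normK ?num_real // (bigD1 i) //= lerDl.
by apply: sumr_ge0 => j _; apply: sqr_ge0.
Qed.

Lemma enorm_box v (dl : R) : 0 <= dl -> (forall i, `|v ord0 i| <= dl) -> enorm v <= d%:R * dl.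
Proof.
move=> dl0 h; apply: le_sq; [exact: enorm_ge0 | by apply: mulr_ge0 |].
rewrite enorm_sq.
apply: (@le_trans _ _ (\sum_(i < d) dl ^+ 2)).
  apply: ler_sum => i _; rewrite -(real_normK (num_real (v ord0 i))); rewrite ler_pXn2r ?nnegrE //; exact: h.
rewrite sumr_const card_ord exprMn -[X in X <= _]mulr_natl ler_wpM2r ?sqr_ge0 //.
case: d {v h} => [|m]; first by rewrite expr0n.
by rewrite -natrX ler_nat expnS expn1 leq_pmulr.
Qed.

Lemma enormZ (c : R) v : enorm (c *: v) = `|c| * enorm v.
Proof.
rewrite /enorm -sqrtr_sqr -sqrtrM ?sqr_ge0 // mulr_sumr; congr Num.sqrt.
by apply: eq_bigr => i _; rewrite mxE exprMn.
Qed.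

Lemma enorm_sym u v : enorm (u - v) = enorm (v - u).
Proof. by rewrite -opprB -scaleN1r enormZ normrN normr1 mul1r. Qed.

Lemma enorm0 : enorm (0 : 'rV[R]_d) = 0.
Proof. by rewrite /enorm big1 ?sqrtr0 // => i _; rewrite mxE expr0n. Qed.

Lemma enormD u v : enorm (u + v) <= enorm u + enorm v.
Proof.
apply: le_sq; [exact: enorm_ge0 | by apply: addr_ge0; apply: enorm_ge0 |].
set S := \sum_i u ord0 i * v ord0 i.
have e1 : enorm (u + v) ^+ 2 = enorm u ^+ 2 + 2 * S + enorm v ^+ 2.
  rewrite !enorm_sq /S mulr_sumr -!big_split /=; apply: eq_bigr => i _.
  by rewrite mxE; ring.
have hS : S <= enorm u * enorm v.
  case: (lerP S 0) => S0; first by apply: (le_trans S0); apply: mulr_ge0; apply: enorm_ge0.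
  apply: le_sq; [exact: ltW | by apply: mulr_ge0; apply: enorm_ge0 |].
  by rewrite exprMn !enorm_sq; apply: cs_sq.
rewrite e1 sqrrD; lra.
Qed.

End En.

Lemma enorm_rev {R : realType} {d : nat} (u v : 'rV[R]_d) :
  enorm u - enorm v <= enorm (u - v).
Proof.
have := enormD (u - v) v; rewrite subrK; lra.
Qed.

Lemma mixed_case {R : realType} {d : nat} (rho : R) (a w : 'rV[R]_d) :
  0 < rho -> enorm a <= rho -> rho < enorm w ->
  enorm (a - (rho / enorm w) *: w) <= 2 * enorm (a - w).
Proof.
move=> r0 ha hw.
have nw0 : 0 < enorm w by lra.
have e1 : a - (rho / enorm w) *: w = (a - w) + (1 - rho / enorm w) *: w.
  by rewrite scalerBl scale1r addrA subrK.
rewrite e1; apply: (le_trans (enormD _ _)); rewrite enormZ.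
have q : rho / enorm w <= 1 by rewrite ler_pdivrMr // mul1r; lra.
rewrite ger0_norm; last lra.
rewrite mulrBl mul1r divfK ?gt_eqF //.
have := enorm_rev w a; rewrite enorm_sym; lra.
Qed.

Lemma both_case {R : realType} {d : nat} (rho : R) (z w : 'rV[R]_d) :
  0 < rho -> rho < enorm z -> rho < enorm w ->
  enorm ((rho / enorm z) *: z - (rho / enorm w) *: w) <= 2 * enorm (z - w).
Proof.
move=> r0 hz hw.
have nz0 : 0 < enorm z by lra.
have nw0 : 0 < enorm w by lra.
move: hz hw nz0 nw0; set nz := enorm z; set nw := enorm w => hz hw nz0 nw0.
have e1 : (rho / nz) *: z - (rho / nw) *: w =
   (rho / nz) *: (z - w) + (rho / nz - rho / nw) *: w.
  by rewrite scalerBr scalerBl addrA subrK.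
rewrite e1; apply: (le_trans (enormD _ _)); rewrite !enormZ.
have c : `|rho / nz - rho / nw| * nw = rho / nz * `|nw - nz|.
  have -> : rho / nz - rho / nw = (rho / nz) * (nw - nz) / nw.
    by field; rewrite !gt_eqF.
  rewrite -[X in _ * X](ger0_norm (ltW nw0)) -normrM -/nw.
  have -> : rho / nz * (nw - nz) / nw * nw = rho / nz * (nw - nz).
    by field; rewrite (gt_eqF nw0) (gt_eqF nz0).
  by rewrite normrM (ger0_norm (divr_ge0 (ltW r0) (ltW nz0))).
rewrite -/nw c (ger0_norm (divr_ge0 (ltW r0) (ltW nz0))).
have q : rho / nz <= 1 by rewrite ler_pdivrMr // mul1r; lra.
have r1 := enorm_rev w z; have r2 := enorm_rev z w.
rewrite -/nz -/nw in r1 r2; rewrite enorm_sym in r1.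
have hn : `|nw - nz| <= enorm (z - w) by rewrite ler_norml; lra.
have e0 : 0 <= enorm (z - w) := enorm_ge0 _.
have q0 : 0 <= rho / nz by apply: divr_ge0; lra.
have := ler_wpM2l q0 hn.
have : rho / nz * enorm (z - w) <= enorm (z - w).
  by rewrite ler_piMl.
lra.
Qed.

Lemma approx (R : realType) (n : nat) (F : 'rV[R]_n.+1 -> 'rV[R]_n.+1) (rho Lam : R)
 (rho0 : 0 <= rho) (Lam0 : 0 <= Lam)
 (Fb : forall z i, `|F z ord0 i| <= rho)
 (Flip : forall (z w : 'rV[R]_n.+1) (dl : R), 0 <= dl ->
  (forall i, `|z ord0 i - w ord0 i| <= dl) -> forall i, `|F z ord0 i - F w ord0 i| <= Lam * dl)
 (e : R) : 0 < e -> exists z : 'rV[R]_n.+1, (forall i, `|z ord0 i| <= rho + 1) /\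
     forall i, `|F z ord0 i - z ord0 i| <= e.
Proof.
move=> e0.
set Lc := rho + 1.
have LcE : Lc = rho + 1 by [].
have Lc0 : 0 < Lc by rewrite /Lc; lra.
set B := 2 * Lc * (Lam + 1) / e.
have B0 : 0 <= B.
  rewrite /B; apply: divr_ge0; last lra.
  by apply: mulr_ge0; [apply: mulr_ge0 |]; lra.
set k := Num.bound B.
have hk : B < k.+1%:R by apply: (lt_le_trans (archi_boundP B0)); rewrite ler_nat.
set h : R := 2 * Lc / k.+1%:R.
have K0 : 0 < k.+1%:R :> R by rewrite ltr0n.
have h0 : 0 < h by rewrite /h; apply: divr_gt0 => //; lra.
have he : (Lam + 1) * h <= e.
  rewrite /h; move: hk; rewrite /B ltr_pdivrMr // => hk.
  rewrite mulrA ler_pdivrMr //; lra.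
have hK : k.+1%:R * h = 2 * Lc by rewrite /h mulrC divfK // gt_eqF.
pose xr (p : {ffun 'I_n.+1 -> nat}) : 'rV[R]_n.+1 := \row_i (- Lc + (p i)%:R * h).
pose lab (p : {ffun 'I_n.+1 -> nat}) : 'I_n.+2 :=
  match [pick i | (p i == k.+1) && [forall i' : 'I_n.+1, (i' < i)%N ==> (p i' != k.+1)]] with
  | Some i => lift ord0 i
  | None => match [pick i | F (xr p) ord0 i < xr p ord0 i] with
            | Some i => lift ord0 i | None => ord0 end end.
have Hbot : forall (p : {ffun 'I_n.+1 -> nat}) (i : 'I_n.+1), p i = 0%N -> lab p != lift ord0 i.
  move=> p i pi0; rewrite /lab; case: pickP => [i0 /andP[/eqP h1 _] | _].
    by apply/eqP => /lift_inj eii; subst i0; rewrite pi0 in h1.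
  case: pickP => [i0 hi0|_]; last by rewrite neq_lift.
  apply/eqP => /lift_inj eii; subst i0; move: hi0; rewrite !mxE pi0 mul0r addr0.
  by have := Fb (xr p) i; rewrite ler_norml => /andP[]; lra.
have Htop : forall (p : {ffun 'I_n.+1 -> nat}) (i : 'I_n.+1), p i = k.+1 ->
    (forall i' : 'I_n.+1, (i' < i)%N -> p i' != k.+1) -> lab p = lift ord0 i.
  move=> p i pik hmin; rewrite /lab; case: pickP => [i0 /andP[/eqP hi0 /forallP h0m] | none].
    congr lift; apply/val_inj/eqP; rewrite eqn_leq; apply/andP; split.
      rewrite leqNgt; apply/negP => lt; have := h0m i; rewrite lt /= pik eqxx //.
    by rewrite leqNgt; apply/negP => lt; have := hmin i0 lt; rewrite hi0 eqxx.
  exfalso; move: (none i); rewrite pik eqxx /= => /negP; apply; apply/forallP => i'.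
  by apply/implyP; exact: hmin i'.
have [v [t full]] := kuhn Hbot Htop.
have xrb : forall (p : {ffun 'I_n.+1 -> nat}) i, (p i <= k.+1)%N -> `|xr p ord0 i| <= Lc.
  move=> p i pk; rewrite mxE ler_norml.
  have : 0 <= (p i)%:R * h by apply: mulr_ge0 => //; lra.
  have : (p i)%:R * h <= k.+1%:R * h by rewrite ler_pM2r // ler_nat.
  lra.
have ptb : forall m i, (pt v t m i <= k.+1)%N.
  by move=> m i; rewrite ffunE; have := ltn_ord (v i); case: ltnP; lia.
have close : forall m m' i, `|xr (pt v t m) ord0 i - xr (pt v t m') ord0 i| <= h.
  move=> m m' i; rewrite !mxE !ffunE !natrD.
  have -> : - Lc + ((v i)%:R + (nat_of_bool (t i < m)%N)%:R) * h -
    (- Lc + ((v i)%:R + (nat_of_bool (t i < m')%N)%:R) * h) =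
    ((nat_of_bool (t i < m)%N)%:R - (nat_of_bool (t i < m')%N)%:R) * h by ring.
  rewrite normrM (gtr0_norm h0) ler_piMl ?(ltW h0) //.
  case: ltnP => _; case: ltnP => _; rewrite /= ?subrr ?normr0 ?subr0 ?sub0r ?normrN ?normr1 //.
have [m0 hm0] := full ord0.
exists (xr (pt v t m0)); split.
  by move=> i; apply: xrb.
set z := xr (pt v t m0).
have lab0 : forall i, z ord0 i <= F z ord0 i.
  move=> i; rewrite leNgt; move: hm0; rewrite /lab.
  case: pickP => [i0 _ | _]; first by move/eqP; rewrite eq_sym (negbTE (neq_lift _ _)).
  case: pickP => [i0 _ | none _]; first by move/eqP; rewrite eq_sym (negbTE (neq_lift _ _)).
  by rewrite none.
move=> i; have [mi hmi] := full (lift ord0 i).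
set w := xr (pt v t mi).
have AB : pt v t mi i = k.+1 \/ F w ord0 i < w ord0 i.
  move: hmi; rewrite /lab; case: pickP => [i0 /andP[/eqP hh0 _] /lift_inj ei| _].
    by subst i0; left.
  case: pickP => [i0 hi0 /lift_inj ei| _]; first by subst i0; right.
  by move/eqP; rewrite (negbTE (neq_lift _ _)).
have cl : forall j, `|z ord0 j - w ord0 j| <= h by move=> j; apply: close.
have Flz := Flip _ _ _ (ltW h0) cl i.
have cli := cl i.
have l0 := lab0 i.
rewrite ler_norml; apply/andP; split; first by lra.
have hLh : h <= (Lam + 1) * h by rewrite ler_peMl //; lra.
move: cli Flz; rewrite !ler_norml => /andP[c1 c2] /andP[f1 f2].
case: AB => [top|lt].
  have wL : w ord0 i = Lc by rewrite /w mxE top hK; lra.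
  have := Fb z i; rewrite ler_norml => /andP[_ fz].
  rewrite /Lc in wL; lra.
lra.
Qed.

Local Open Scope classical_set_scope.
Lemma le0_small (R : realFieldType) (a : R) : (forall e, 0 < e -> a <= e) -> a <= 0.
Proof.
move=> h; rewrite leNgt; apply/negP => a0.
have := h (a / 2) (divr_gt0 a0 (ltr0Sn _ 1)); lra.
Qed.

Lemma approx_to_exact (R : realType) n (F : 'rV[R]_n -> 'rV[R]_n) (L Lam : R) :
 (forall (z w : 'rV[R]_n) (dl : R), 0 <= dl -> (forall i, `|z ord0 i - w ord0 i| <= dl) ->
     forall i, `|F z ord0 i - F w ord0 i| <= Lam * dl) ->
 (forall e : R, 0 < e -> exists z : 'rV[R]_n, (forall i, `|z ord0 i| <= L) /\
     forall i, `|F z ord0 i - z ord0 i| <= e) ->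
 exists z, F z = z.
Proof.
move=> Flip happ.
set K := [set v : 'rV[R]_n | forall i, `[-L, L]%classic (v ord0 i)].
have cK : compact K.
  have h := (@rV_compact R n (fun=> `[-L, L]%classic) (fun=> @segment_compact R (-L) L)).
  exact h.
set B := fun e : R => [set z : 'rV[R]_n | K z /\ forall i, `|F z ord0 i - z ord0 i| <= e].
set G := filter_from [set e : R | 0 < e] B.
have GF : Filter G.
  apply: filter_from_filter; first by exists 1%R => /=.
  move=> e1 e2 /= e1p e2p; exists (Num.min e1 e2); first by rewrite /= lt_min e1p.
  move=> z [Kz Hz]. split; split => // i; apply: (le_trans (Hz i)).
    by rewrite ge_min lexx.
  by rewrite ge_min lexx orbT.
have GP : ProperFilter G.
  apply: filter_from_proper => e /= ep.
  have [z [zL zF]] := happ e ep; exists z; split => // i.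
  by rewrite /= in_itv /= -ler_norml.
have GK : G K by exists 1 => //= z [].
have [z [Kz cz]] := cK G GP GK.
exists z; apply/rowP => j; apply/eqP; rewrite -subr_eq0 -normr_eq0 eq_le normr_ge0 andbT.
apply: le0_small => e ep.
set c := `|Lam| + 2.
have cp : 0 < c by rewrite /c; apply: (lt_le_trans (ltr0Sn _ 1)); rewrite lerDr.
have ecp : 0 < e / c by apply: divr_gt0.
have [w [[Kw Hw] bw]] := cz _ _ (@in_filter_from _ _ [set e : R | 0 < e] B _ ecp) (nbhsx_ballx z (e / c) ecp).
move: bw => [_ bw]; have bwj := bw ord0 j; rewrite /ball /= in bwj.
have hzw : forall i, `|z ord0 i - w ord0 i| <= e / c.
  by move=> i; apply: ltW; have := bw ord0 i; rewrite /ball /=.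
have h1 := Flip z w (e / c) (ltW ecp) hzw j.
have h2 := Hw j.
have e1 : e = c * (e / c) by rewrite mulrC divfK // gt_eqF.
have hL : Lam * (e / c) <= `|Lam| * (e / c) by rewrite ler_pM2r // ler_norm.
have -> : F z 0 j - z 0 j = (F z ord0 j - F w ord0 j) + (F w ord0 j - w ord0 j) - (z ord0 j - w ord0 j) by rewrite /=; ring.
apply: (le_trans (ler_normB _ _)); apply: (le_trans (lerD (ler_normD _ _) (lexx _))).
rewrite [X in _ <= X]e1 /c mulrDl.
have : `|z ord0 j - w ord0 j| <= e / c := hzw j.
lra.
Qed.

Local Close Scope classical_set_scope.

Lemma brouwer_cube (R : realType) (d : nat) (F : 'rV[R]_d -> 'rV[R]_d) (rho Lam : R)
 (rho0 : 0 <= rho) (Lam0 : 0 <= Lam)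
 (Fb : forall z i, `|F z ord0 i| <= rho)
 (Flip : forall (z w : 'rV[R]_d) (dl : R), 0 <= dl ->
  (forall i, `|z ord0 i - w ord0 i| <= dl) -> forall i, `|F z ord0 i - F w ord0 i| <= Lam * dl) :
 exists z, F z = z.
Proof.
case: d F Fb Flip => [|n] F Fb Flip.
  by exists 0; apply/rowP => -[].
apply: (@approx_to_exact R n.+1 F (rho + 1) Lam Flip).
exact: (@approx R n F rho Lam rho0 Lam0 Fb Flip).
Qed.

Lemma enormN {R : realType} {d : nat} (v : 'rV[R]_d) : enorm (- v) = enorm v.
Proof. by rewrite -scaleN1r enormZ normrN normr1 mul1r. Qed.

Theorem proposition11 (R : realType) (d : nat)
  (g : 'rV[R]_d -> 'rV[R]_d -> 'rV[R]_d) (Rad : R) (hRad : 0 < Rad)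
  (hlip : exists LgR : R, 0 <= LgR /\
     forall x z1 z2 : 'rV[R]_d, enorm x <= Rad ->
       enorm (g x z1 - g x z2) <= LgR * enorm (z1 - z2))
  (C0 C1 : R) (hC0 : 0 <= C0) (hC1 : 0 <= C1)
  (hgrowth : forall x z : 'rV[R]_d, enorm x <= Rad ->
       enorm (g x z) <= C0 + C1 * enorm z)
  (b : R) (hb : C1 < `|b|) :
  forall M : R, 0 < M ->
    let Mt := (M + C0) / (`|b| - C1) in
    (exists L : R, 0 <= L /\
       forall x, eball 0 Rad x -> lipschitz_with L (fg b g x)) /\
    (forall x, eball 0 Rad x ->
       forall y, eball 0 M y -> exists z, eball 0 Mt z /\ fg b g x z = y).
Proof.
move=> M M0 Mt.
have MtE : Mt = (M + C0) / (`|b| - C1) by [].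
have b0 : 0 < `|b| by lra.
have bC : 0 < `|b| - C1 by lra.
have [LgR [LgR0 hL]] := hlip.
have xR : forall x : 'rV[R]_d, eball 0 Rad x -> enorm x <= Rad.
  by move=> x; rewrite /eball /= subr0 => h; apply: ltW.
split.
  exists (`|b| + LgR); split; first lra.
  move=> x hx z1 z2; have xr := xR x hx.
  rewrite /fg.
  have -> : b *: z1 + g x z1 - (b *: z2 + g x z2) = b *: (z1 - z2) + (g x z1 - g x z2).
    by rewrite scalerBr opprD addrACA.
  apply: (le_trans (enormD _ _)); rewrite enormZ.
  have := hL x z1 z2 xr; have := enorm_ge0 (z1 - z2); lra.
move=> x hx y hy; have xr := xR x hx.
move: hy; rewrite /eball /= subr0 => hy.
set ny := enorm y in hy.
have ny0 : 0 <= ny := enorm_ge0 y.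
set r0 := (ny + C0) / (`|b| - C1).
have r0E : r0 * (`|b| - C1) = ny + C0 by rewrite /r0 divfK // gt_eqF.
have r0ge : 0 <= r0 by rewrite /r0; apply: divr_ge0; lra.
have r0lt : r0 < Mt by rewrite MtE /r0 ltr_pM2r ?invr_gt0 //; lra.
set rho := (r0 + Mt) / 2.
have rhoE : rho * 2 = r0 + Mt by rewrite /rho divfK.
have rlo : r0 < rho by lra.
have rhi : rho < Mt by lra.
have rho0 : 0 < rho by lra.
have rhoc : ny + C0 + C1 * rho <= `|b| * rho.
  have : r0 * (`|b| - C1) <= rho * (`|b| - C1) by rewrite ler_pM2r //; lra.
  rewrite r0E; lra.
pose P (z : 'rV[R]_d) := if enorm z <= rho then z else (rho / enorm z) *: z.
pose T (w : 'rV[R]_d) := b^-1 *: (y - g x w).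
pose F (z : 'rV[R]_d) := T (P z).
have PB : forall z, enorm (P z) <= rho.
  move=> z; rewrite /P; case: ifP => // /negbT; rewrite -ltNge => h.
  rewrite enormZ ger0_norm ?divfK ?gt_eqF //; last by apply: divr_ge0; lra.
  lra.
have Plip : forall z w, enorm (P z - P w) <= 2 * enorm (z - w).
  move=> z w; rewrite /P; case: ifP => hz; case: ifP => hw.
  - by have := enorm_ge0 (z - w); lra.
  - by apply: mixed_case => //; rewrite ltNge hw.
  - by rewrite enorm_sym [enorm (z - w)]enorm_sym; apply: mixed_case => //; rewrite ltNge hz.
  - by apply: both_case => //; rewrite ltNge ?hz ?hw.
have TB : forall w, enorm w <= rho -> enorm (T w) <= rho.
  move=> w hw; rewrite /T enormZ normfV.
  have h1 := enormD y (- g x w); rewrite enormN -/ny in h1.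
  have h2 := hgrowth x w xr.
  have h3 : C1 * enorm w <= C1 * rho by rewrite ler_wpM2l.
  rewrite ler_pdivrMl //; lra.
have TL : forall w1 w2, enorm (T w1 - T w2) <= `|b|^-1 * LgR * enorm (w1 - w2).
  move=> w1 w2; rewrite /T -scalerBr.
  have -> : y - g x w1 - (y - g x w2) = g x w2 - g x w1.
    by rewrite opprD opprK addrACA subrr add0r addrC.
  rewrite enormZ normfV -mulrA ler_pM2l ?invr_gt0 //.
  by rewrite [enorm (w1 - w2)]enorm_sym; apply: hL.
have [z Fz] : exists z, F z = z.
  apply: (@brouwer_cube R d F rho (`|b|^-1 * LgR * 2 * d%:R)).
  - exact: ltW.
  - by apply: mulr_ge0 => //; apply: mulr_ge0 => //; apply: mulr_ge0 => //; rewrite invr_ge0 ltW.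
  - by move=> z i; apply: (le_trans (enorm_coord _ i)); apply: TB; apply: PB.
  - move=> z w dl dl0 hzw i.
    apply: (@le_trans _ _ (enorm (F z - F w))).
      by have := enorm_coord (F z - F w) i; rewrite mxE [(- F w) ord0 i]mxE.
    apply: (le_trans (TL _ _)).
    have e1 := Plip z w.
    have e2 : enorm (z - w) <= d%:R * dl.
      by apply: enorm_box => // j; rewrite !mxE; apply: hzw.
    have k0 : 0 <= `|b|^-1 * LgR by apply: mulr_ge0 => //; rewrite invr_ge0 ltW.
    have e3 : 2 * enorm (z - w) <= 2 * (d%:R * dl) by rewrite ler_pM2l.
    have := ler_wpM2l k0 (le_trans e1 e3).
    by rewrite !mulrA.
have hz : enorm z <= rho by rewrite -Fz; apply: TB; apply: PB.
have Pz : P z = z by rewrite /P hz.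
have Tz : T z = z by rewrite -{2}Fz /F Pz.
exists z; split.
  by rewrite /eball /= subr0; lra.
rewrite /fg -{1}Tz /T scalerA mulfV ?scale1r ?subrK //.
by rewrite -normr_gt0.
Qed.
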